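(* Let $M$ be an infinite-horizon $\gamma$-discounted zero-sum NMG with $n$ players and let $\pi$ be an $\epsilon$-approximate Markov CCE of $M$. Let $\hat\pi$ be the product Markov policy obtained by marginalizing $\pi$ at each state, i.e. $\hat\pi_h(\mathbf a\mid s)=\prod_{i\in\mathcal N}\pi_{h,i}(a_i\mid s)$ where $\pi_{h,i}(\cdot\mid s)$ is the marginal of $\pi_h(\cdot\mid s)\in\Delta(\mathcal A)$ on $\mathcal A_i$. Then $\hat\pi$ is an $\frac{(n+1)\epsilon}{1-\gamma}$-approximate Markov NE of $M$. Similarly, for a finite-horizon ($H$-step) zero-sum NMG, marginalizing an $\epsilon$-approximate Markov CCE at each state and step yields an $(n+1)H\epsilon$-approximate Markov NE.
   Context: A Markov game has players $\mathcal N=[n]$, finite states $\mathcal S$, finite actions $\mathcal A=\prod_i\mathcal A_i$, transitions $\mathbb P_h$, bounded rewards $r_{h,i}$, discount $\gamma$ (infinite horizon: $H=\infty$, $\gamma<1$, time-independent $\mathbb P,r_i$; finite horizon: $H<\infty$). A joint Markov policy is $\pi=\{\pi_h:\mathcal S\to\Delta(\mathcal A)\}_h$ (possibly correlated); a product policy has $\pi_h(s)\in\prod_i\Delta(\mathcal A_i)$. $V^\pi_{h,i}(s)=\mathbb E_\pi[\sum_{h'\ge h}\gamma^{h'-h}r_{h',i}(s_{h'},\mathbf a_{h'})\mid s_h=s]$. For a player $i$ and a Markov policy $\mu_i$ of player $i$, $(\mu_i,\pi_{-i})$ means $i$ plays $\mu_i$ while the others play the marginal of $\pi$ on $\mathcal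 A_{-i}$ at each state and step. A joint Markov policy $\pi$ is an $\epsilon$-approximate Markov (perfect) CCE if $\max_i\max_{\mu_i}(V^{\mu_i,\pi_{-i}}_{h,i}(\rho)-V^\pi_{h,i}(\rho))\le\epsilon$ for all state distributions $\rho$ and all steps $h$ (where $V(\rho)=\mathbb E_{s\sim\rho}V(s)$); it is an $\epsilon$-approximate Markov (perfect) NE if moreover it is a product policy. A Markov game is a zero-sum NMG with respect to an undirected connected graph $(\mathcal N,\mathcal E_Q)$ (with $\mathcal E_{Q,i}$ the neighbors of $i$) if for every (sequence of) functions $V:\mathcal S\to\mathbb R$, the functions $Q_{h,i}^V(s,\mathbf a)=r_{h,i}(s,\mathbf a)+\gamma\sum_{s'}\mathbb P_h(s'\mid s,\mathbf a)V_{h+1}(s')$ can be written as $\sum_{j\in\mathcal E_{Q,i}}Q^V_{h,i,j}(s,a_i,a_j)$ for some functions $Q^V_{h,i,j}$, and for $V\equiv0$ these pairwise functions satisfy $\sum_i\sum_{j\in\mathcal E_{Q,i}}Q^{\mathbf 0}_{h,i,j}(s,a_i,a_j)=0$ for all $s,h,\mathbf a$. *)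

(* Defs.v *)
From HB Require Import structures.
From mathcomp Require Import all_boot all_order all_algebra.
From mathcomp Require Import boolp classical_sets reals topology normedtype sequences.
Set Implicit Arguments. Unset Strict Implicit. Unset Printing Implicit Defensive.
Import Order.TTheory GRing.Theory Num.Theory.
Import numFieldNormedType.Exports.
Local Open Scope ring_scope.

Section MarkovGames.
Variable R : realType.
Variable n : nat.
Variable S : finType.
Variable A : 'I_n -> finType.

Definition joint := {dffun forall i : 'I_n, A i}.

Definition is_dist (T : finType) (d : T -> R) :=
  (forall x, 0 <= d x) /\ \sum_x d x = 1.

(* (possibly correlated) joint Markov policy: pi h s a = pi_h(a | s) *)
Definition policy := nat -> S -> joint -> R.
Definition ppolicy (i : 'I_n) := nat -> S -> A i -> R.
(* transitions P h s a s' = P_h(s' | s, a) and rewards r h i s a = r_{h,i}(s,a) *)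
Definition trans := nat -> S -> joint -> S -> R.
Definition reward := nat -> 'I_n -> S -> joint -> R.

Definition valid_policy (steps : pred nat) (pi : policy) :=
  forall h, steps h -> forall s, is_dist (pi h s).

(* distribution of s_{h+k} when s_h ~ rho and pi is played from step h on *)
Fixpoint state_dist (P : trans) (pi : policy) (h : nat) (rho : S -> R) (k : nat)
  : S -> R :=
  match k with
  | 0 => rho
  | k'.+1 => fun s' => \sum_s \sum_(a : joint)
       state_dist P pi h rho k' s * pi (h + k')%N s a * P (h + k')%N s a s'
  end.

Definition exp_reward (r : reward) (i : 'I_n) (pi : policy) (t : nat) (d : S -> R) :=
  \sum_s \sum_(a : joint) d s * pi t s a * r t i s a.

Definition disc_term (P : trans) (r : reward) (gamma : R) (pi : policy)
  (i : 'I_n) (h : nat) (rho : S -> R) (k : nat) :=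
  gamma ^+ k * exp_reward r i pi (h + k)%N (state_dist P pi h rho k).

(* finite horizon (steps 0 .. H-1, V_H = 0): V^pi_{h,i}(rho) *)
Definition Vfin (H : nat) (P : trans) (r : reward) (gamma : R)
  (pi : policy) (i : 'I_n) (h : nat) (rho : S -> R) : R :=
  \sum_(0 <= k < H - h) disc_term P r gamma pi i h rho k.

Definition Vinf (P : trans) (r : reward) (gamma : R)
  (pi : policy) (i : 'I_n) (h : nat) (rho : S -> R) : R :=
  limn (fun N => \sum_(0 <= k < N) disc_term P r gamma pi i h rho k).

(* (mu_i, pi_{-i}): i plays mu_i, the others play the marginal of pi on A_{-i} *)
Definition dev (i : 'I_n) (mu : ppolicy i) (pi : policy) : policy :=
  fun h s a => mu h s (a i) *
    \sum_(b : joint | [forall j, (j != i) ==> (b j == a j)]) pi h s b.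

Definition marg (i : 'I_n) (pi : policy) (h : nat) (s : S) (x : A i) : R :=
  \sum_(b : joint | b i == x) pi h s b.

Definition prod_marg (pi : policy) : policy :=
  fun h s a => \prod_(i : 'I_n) marg pi h s (a i).

Definition is_product (steps : pred nat) (pi : policy) :=
  forall h, steps h -> forall s, exists sigma : forall i : 'I_n, A i -> R,
    (forall i, is_dist (sigma i)) /\ forall a : joint, pi h s a = \prod_i sigma i (a i).

Definition valfun := policy -> 'I_n -> nat -> (S -> R) -> R.

Definition is_CCE (V : valfun) (steps : pred nat) (eps : R) (pi : policy) :=
  forall (i : 'I_n) (mu : ppolicy i),
    (forall h, steps h -> forall s, is_dist (mu h s)) ->
  forall rho : S -> R, is_dist rho ->
  forall h, steps h -> V (dev mu pi) i h rho - V pi i h rho <= eps.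

Definition is_NE (V : valfun) (steps : pred nat) (eps : R) (pi : policy) :=
  is_CCE V steps eps pi /\ is_product steps pi.

Definition Qfun (P : trans) (r : reward) (gamma : R) (h : nat) (i : 'I_n)
  (Vnext : S -> R) (s : S) (a : joint) : R :=
  r h i s a + gamma * \sum_s' P h s a s' * Vnext s'.

Definition connected_graph (E : rel 'I_n) :=
  symmetric E /\ irreflexive E /\ (forall i j, connect E i j).

Definition zs_NMG (steps : pred nat) (P : trans) (r : reward) (gamma : R) :=
  exists E : rel 'I_n, connected_graph E /\
    (forall h, steps h -> forall (V : nat -> S -> R) (i : 'I_n),
       exists Q : forall j : 'I_n, S -> A i -> A j -> R,
         forall s (a : joint),
           Qfun P r gamma h i (V h.+1) s a = \sum_(j | E i j) Q j s (a i) (a j)) /\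
    (forall h, steps h ->
       exists Q0 : forall i j : 'I_n, S -> A i -> A j -> R,
         (forall i s (a : joint),
            Qfun P r gamma h i (fun _ => 0) s a = \sum_(j | E i j) Q0 i j s (a i) (a j)) /\
         (forall s (a : joint),
            \sum_(i : 'I_n) \sum_(j | E i j) Q0 i j s (a i) (a j) = 0)).

End MarkovGames.

(* Main.v *)
Require Import Defs.
From HB Require Import structures.
From mathcomp Require Import all_boot all_order all_algebra.
From mathcomp Require Import boolp classical_sets reals topology normedtype sequences.
From mathcomp Require Import ring lra functions.
Import Order.TTheory GRing.Theory Num.Theory.
Import numFieldNormedType.Exports.
Local Open Scope ring_scope.
Set Implicit Arguments. Unset Strict Implicit. Unset Printing Implicit Defensive.

Section Comb.
Variable R : realType.
Variable n : nat.
Variable A : 'I_n -> finType.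
Local Notation joint := (joint A).
Definition tg (k : 'I_n) (z : A k) : {k : 'I_n & A k} := Tagged (fun k => A k) z.

Lemma tgE k (z w : A k) : (tg z == tg w) = (z == w).
Proof. by rewrite /tg eq_Tagged. Qed.

Lemma prod_sum_dep (F : forall k, A k -> R) :
  \prod_k \sum_(z : A k) F k z = \sum_(a : joint) \prod_k F k (a k).
Proof.
pose P_ := fun k => [ffun z : A k => F k z].
have -> : \prod_k \sum_(z : A k) F k z = \prod_k \sum_(z : A k) P_ k z.
  by apply: eq_bigr => k _; apply: eq_bigr => z _; rewrite ffunE.
have -> : \sum_(a : joint) \prod_k F k (a k) = \sum_(a : joint) \prod_k P_ k (a k).
  by apply: eq_bigr => a _; apply: eq_bigr => k _; rewrite ffunE.
under eq_bigr do rewrite (@big_tag _ 0 +%R _ (fun k => A k) (fun k => P_ k) _).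
rewrite bigA_distr_big_dep.
rewrite -(@big_fprod _ 0 1 *%R +%R _ (fun k => A k) P_).
rewrite (reindex (@fprod_of_dffun _ (fun k => A k))); last first.
  exact/onW_bij/fprod_of_dffun_bij.
by apply: eq_bigr => a _; apply: eq_bigr => k _; rewrite /fprod_of_dffun fprodE.
Qed.
End Comb.


Section Comb2.
Variable R : realType.
Variable n : nat.
Variable A : 'I_n -> finType.
Local Notation joint := (joint A).

Lemma sum_cond_prod (C : pred joint) (c : forall k, pred (A k)) (G : forall k, A k -> R) :
  (forall a, C a = [forall k, c k (a k)]) ->
  \sum_(a | C a) \prod_k G k (a k) = \prod_k \sum_(z | c k z) G k z.
Proof.
move=> HC; rewrite big_mkcond /=.
under [RHS]eq_bigr do rewrite big_mkcond /=.
rewrite prod_sum_dep; apply: eq_bigr => a _; rewrite HC.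
have [/forallP H|/forallPn [k Hk]] := boolP [forall k, c k (a k)].
  by apply: eq_bigr => k _; rewrite H.
by rewrite (bigD1 k) //= (negbTE Hk) mul0r.
Qed.

Definition FA (i : 'I_n) (b a : joint) := [forall k, (k != i) ==> (b k == a k)].

Lemma count0 (i : 'I_n) (x : A i) (b : joint) :
  \sum_(a : joint | (a i == x) && FA i b a) (1 : R) = 1.
Proof.
pose c := fun k (z : A k) => if k == i then tg z == tg x else z == b k.
transitivity (\sum_(a : joint | (a i == x) && FA i b a) \prod_k (fun k (_ : A k) => (1:R)) k (a k)).
  by apply: eq_bigr => a _; rewrite big1.
rewrite (@sum_cond_prod (fun a : joint => (a i == x) && FA i b a) c (fun _ _ => 1)); last first.
  move=> a; apply/andP/forallP.
    move=> [/eqP ai /forallP H] k; rewrite /c; case: eqP => [ek|/eqP nk].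
      by subst k; rewrite tgE ai.
    by have := H k; rewrite nk /= eq_sym.
  move=> H; split.
    by have := H i; rewrite /c eqxx tgE.
  apply/forallP => k; apply/implyP => nk.
  by have := H k; rewrite /c (negbTE nk) eq_sym.
apply: big1 => k _; rewrite /c; case: eqP => [ek|_].
  subst k. by rewrite (eq_bigl (pred1 x)) ?big_pred1_eq // => z; rewrite /= tgE.
by rewrite big_pred1_eq.
Qed.


Definition mg (d : joint -> R) (k : 'I_n) (z : A k) := \sum_(b : joint | b k == z) d b.

Lemma sum_mg d k : \sum_(z : A k) mg d z = \sum_(b : joint) d b.
Proof. by rewrite (partition_big (fun b : joint => b k) predT) //. Qed.

Lemma mg_ge0 d (k : 'I_n) (z : A k) : (forall b, 0 <= d b) -> 0 <= mg d z.
Proof. by move=> H; apply: sumr_ge0. Qed.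

Lemma devF (i : 'I_n) (G : A i -> R) (d : joint -> R) :
  \sum_(a : joint) G (a i) * \sum_(b : joint | FA i b a) d b
  = (\sum_(x : A i) G x) * \sum_(b : joint) d b.
Proof.
under eq_bigr do rewrite big_distrr /=.
rewrite (exchange_big_dep predT) //= mulr_sumr; apply: eq_bigr => b _.
rewrite -big_distrl /= ; congr (_ * _).
rewrite (partition_big (fun a : joint => a i) predT) //=; apply: eq_bigr => x _.
transitivity (\sum_(a : joint | (a i == x) && FA i b a) (1 : R) * G x).
  by apply: eq_big => [a|a /andP [_ /eqP ->]]; rewrite ?mul1r // andbC.
by rewrite -big_distrl /= count0 mul1r.
Qed.

Lemma devD (i j : 'I_n) (ij : i != j) (x : A i) (y : A j) (d : joint -> R) :
  \sum_(a : joint | (a i == x) && (a j == y)) \sum_(b : joint | FA i b a) d b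
  = \sum_(b : joint | b j == y) d b.
Proof.
rewrite (exchange_big_dep predT) //=; rewrite [RHS]big_mkcond /=.
apply: eq_bigr => b _.
transitivity (\sum_(a : joint | (a i == x) && (a j == y) && FA i b a) (1 : R) * d b).
  by apply: eq_bigr => a _; rewrite mul1r.
rewrite -big_distrl /=.
case: ifP => [/eqP bj|/negbT nbj].
  suff -> : \sum_(a : joint | (a i == x) && (a j == y) && FA i b a) (1:R)
         = \sum_(a : joint | (a i == x) && FA i b a) 1 by rewrite count0 mul1r.
  apply: eq_bigl => a.
  apply/idP/idP => [/andP [/andP [-> _] ->] //|/andP [ai /forallP H]].
  rewrite ai /=; have := H j; rewrite eq_sym ij /= => /eqP <-; rewrite bj eqxx.
  exact/forallP.
rewrite big_pred0 ?mul0r // => a; apply/negP => /andP [/andP [_ /eqP aj] /forallP H].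
have := H j; rewrite eq_sym ij /= aj => /eqP bj'; by rewrite bj' eqxx in nbj.
Qed.

Lemma devPM (i j : 'I_n) (ij : i != j) (x : A i) (y : A j) (mu : A i -> R) (d : joint -> R) :
  \sum_(a : joint | (a i == x) && (a j == y)) mu (a i) * \sum_(b : joint | FA i b a) d b
  = mu x * \sum_(b : joint | b j == y) d b.
Proof.
rewrite -(devD ij x y d) big_distrr /=.
by apply: eq_bigr => a /andP [/eqP -> _].
Qed.

Lemma prodM1 (m : forall k, A k -> R) (j : 'I_n) (y : A j) :
  (forall k, \sum_(z : A k) m k z = 1) ->
  \sum_(a : joint | a j == y) \prod_k m k (a k) = m j y.
Proof.
move=> Hm.
pose c := fun k (z : A k) => (k != j) || (tg z == tg y).
rewrite (@sum_cond_prod (fun a : joint => a j == y) c m); last first.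
  move=> a; apply/idP/forallP => [/eqP aj k|H]; rewrite /c.
    by case: eqP => [ek|] //=; subst k; rewrite aj tgE.
  by have := H j; rewrite /c eqxx /= tgE.
rewrite (bigD1 j) //= [X in _ * X]big1 ?mulr1.
  by rewrite /c eqxx /= (eq_bigl (pred1 y)) ?big_pred1_eq // => z; rewrite /= tgE.
by move=> k nk; rewrite /c nk /=; apply: Hm.
Qed.

Lemma prodM2 (m : forall k, A k -> R) (i j : 'I_n) (ij : i != j) (x : A i) (y : A j) :
  (forall k, \sum_(z : A k) m k z = 1) ->
  \sum_(a : joint | (a i == x) && (a j == y)) \prod_k m k (a k) = m i x * m j y.
Proof.
move=> Hm.
pose c := fun k (z : A k) => ((k != i) || (tg z == tg x)) && ((k != j) || (tg z == tg y)).
rewrite (@sum_cond_prod (fun a : joint => (a i == x) && (a j == y)) c m); last first.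
  move=> a; apply/idP/forallP => [/andP [/eqP ai /eqP aj] k|H]; rewrite /c.
    apply/andP; split; case: eqP => [ek|] //=; subst k; by rewrite ?ai ?aj tgE.
  have := H i; rewrite /c eqxx /= tgE => /andP [-> _].
  by have := H j; rewrite /c eqxx /= tgE orbC => /andP [_ ->].
rewrite (bigD1 i) //= (bigD1 j) /=; last by rewrite eq_sym.
rewrite [X in _ * (_ * X)]big1 ?mulr1.
  rewrite /c eqxx ij /= [X in _ * X](eq_bigl (pred1 y)) ?big_pred1_eq; last first.
    by move=> z; rewrite /= tgE eq_sym ij eqxx.
  by rewrite (eq_bigl (pred1 x)) ?big_pred1_eq // => z; rewrite /= tgE andbT.
by move=> k /andP [ki kj]; rewrite /c ki kj /=; apply: Hm.
Qed.

End Comb2.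


Section Dyn.
Variable R : realType.
Variable n : nat.
Variable S : finType.
Variable A : 'I_n -> finType.
Local Notation joint := (joint A).

Definition pm (d : joint -> R) (i j : 'I_n) (x : A i) (y : A j) :=
  \sum_(a : joint | (a i == x) && (a j == y)) d a.

Lemma pm_expand (d : joint -> R) (i j : 'I_n) (G : A i -> A j -> R) :
  \sum_(a : joint) d a * G (a i) (a j) = \sum_(x : A i) \sum_(y : A j) G x y * pm d x y.
Proof.
rewrite (partition_big (fun a : joint => a i) predT) //=; apply: eq_bigr => x _.
rewrite (partition_big (fun a : joint => a j) predT) //=.
apply: eq_bigr => y _; rewrite /pm big_distrr /=.
by apply: eq_bigr => a /andP [/eqP -> /eqP ->]; rewrite mulrC.
Qed.

Definition dec (E : rel 'I_n) (i : 'I_n) (f : joint -> R) :=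
  exists Q : forall j, A i -> A j -> R, forall a : joint, f a = \sum_(j | E i j) Q j (a i) (a j).

Lemma dec_sum (E : rel 'I_n) (i : 'I_n) (f : joint -> R) (d1 d2 : joint -> R) :
  (forall j, E i j -> forall (x : A i) (y : A j), pm d1 x y = pm d2 x y) -> dec E i f ->
  \sum_(a : joint) d1 a * f a = \sum_(a : joint) d2 a * f a.
Proof.
move=> H [Q HQ].
have E1 : forall d : joint -> R, \sum_(a : joint) d a * f a =
   \sum_(j | E i j) \sum_(a : joint) d a * Q j (a i) (a j).
  move=> d; under eq_bigr do rewrite HQ big_distrr /=.
  by rewrite exchange_big.
rewrite !E1; apply: eq_bigr => j Eij; rewrite !pm_expand.
by apply: eq_bigr => x _; apply: eq_bigr => y _; rewrite H.
Qed.

Lemma dec_sub E i f g : dec E i f -> dec E i g -> dec E i (fun a => f a - g a).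
Proof.
move=> [Q1 H1] [Q2 H2]; exists (fun j x y => Q1 j x y - Q2 j x y) => a.
by rewrite H1 H2 sumrB.
Qed.

Variables (P : trans R S A) (r : reward R S A) (gamma : R).

Definition w (p : policy R S A) h (rho : S -> R) k s :=
  gamma ^+ k * state_dist P p h rho k s.

Lemma wS p h rho k s' :
  w p h rho k.+1 s' = \sum_s w p h rho k s *
     \sum_(a : joint) p (h + k)%N s a * (gamma * P (h + k)%N s a s').
Proof.
rewrite /w /= exprSr -mulrA !mulr_sumr; apply: eq_bigr => s _.
rewrite big_distrr /= big_distrr /= [RHS]big_distrr /=; apply: eq_bigr => a _; ring.
Qed.

Lemma disc_w p i h rho k :
  disc_term P r gamma p i h rho k =
  \sum_s w p h rho k s * \sum_(a : joint) p (h + k)%N s a * r (h + k)%N i s a.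
Proof.
rewrite /disc_term /exp_reward mulr_sumr; apply: eq_bigr => s _.
rewrite /w !big_distrr /=; apply: eq_bigr => a _; ring.
Qed.

Lemma w_congr (p1 p2 : policy R S A) h rho K :
  (forall t, (h <= t)%N -> (t < h + K)%N -> forall s s',
     \sum_(a : joint) p1 t s a * (gamma * P t s a s') =
     \sum_(a : joint) p2 t s a * (gamma * P t s a s')) ->
  forall k, (k <= K)%N -> w p1 h rho k =1 w p2 h rho k.
Proof.
move=> H; elim=> [|k IH] kK s.
  by rewrite /w.
rewrite !wS; apply: eq_bigr => s0 _; rewrite IH ?(ltnW kK) //; congr (_ * _).
apply: H; rewrite ?leq_addr //; by rewrite ltn_add2l.
Qed.

Lemma disc_congr (p1 p2 : policy R S A) i h rho K :
  (forall t, (h <= t)%N -> (t < h + K)%N -> forall s s',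
     \sum_(a : joint) p1 t s a * (gamma * P t s a s') =
     \sum_(a : joint) p2 t s a * (gamma * P t s a s')) ->
  (forall t, (h <= t)%N -> (t < h + K)%N -> forall s,
     \sum_(a : joint) p1 t s a * r t i s a =
     \sum_(a : joint) p2 t s a * r t i s a) ->
  forall k, (k < K)%N -> disc_term P r gamma p1 i h rho k = disc_term P r gamma p2 i h rho k.
Proof.
move=> H1 H2 k kK; rewrite !disc_w; apply: eq_bigr => s _.
rewrite (@w_congr p1 p2 h rho K H1 k (ltnW kK) s) H2 // ?leq_addr //; by rewrite ltn_add2l.
Qed.

Lemma disc_sum0 p h rho k :
  (forall s (a : joint), \sum_(i : 'I_n) r (h + k)%N i s a = 0) ->
  \sum_(i : 'I_n) disc_term P r gamma p i h rho k = 0.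
Proof.
move=> H; under eq_bigr do rewrite disc_w.
rewrite exchange_big big1 // => s _; rewrite -big_distrr /= exchange_big big1 ?mulr0 //.
by move=> a _; rewrite -big_distrr /= H mulr0.
Qed.

End Dyn.


Section Facts.
Variable R : realType.
Variable n : nat.
Variable S : finType.
Variable A : 'I_n -> finType.
Local Notation joint := (joint A).

Lemma nmg_facts (steps : pred nat) (P : trans R S A) (r : reward R S A) gamma :
  zs_NMG steps P r gamma ->
  exists E : rel 'I_n, irreflexive E /\
   (forall h, steps h -> forall i s, dec E i (r h i s) /\
        forall s', dec E i (fun a => gamma * P h s a s')) /\
   (forall h, steps h -> forall s a, \sum_(i : 'I_n) r h i s a = 0).
Proof.
move=> [E [[_ [irrE _]] [H1 H2]]]; exists E; split => //; split.
  move=> h sh i s.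
  have Er : dec E i (r h i s).
    have [Q HQ] := H1 h sh (fun _ _ => 0) i.
    exists (fun j => Q j s) => a; rewrite -HQ /Qfun big1 ?mulr0 ?addr0 //.
    by move=> s' _; rewrite mulr0.
  split => // s'.
  have [Q HQ] := H1 h sh (fun _ z => (z == s')%:R) i.
  have EQ : dec E i (fun a => Qfun P r gamma h i (fun z => (z == s')%:R) s a).
    by exists (fun j => Q j s) => a; rewrite HQ.
  have := dec_sub EQ Er; case=> Q' HQ'; exists Q' => a; rewrite -HQ' /Qfun.
  rewrite (bigD1 s') //= eqxx mulr1 big1 ?addr0; first by ring.
  by move=> z /negbTE ->; rewrite mulr0.
move=> h sh s a; have [Q0 [HQ0 HS]] := H2 h sh.
transitivity (\sum_(i : 'I_n) \sum_(j | E i j) Q0 i j s (a i) (a j)); last exact: HS.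
apply: eq_bigr => i _; rewrite -HQ0 /Qfun big1 ?mulr0 ?addr0 //.
by move=> s' _; rewrite mulr0.
Qed.

Lemma marg_dist (pi : policy R S A) h s (i : 'I_n) :
  is_dist (pi h s) -> is_dist (marg pi h s (i := i)).
Proof.
move=> [H0 H1]; split.
  by move=> x; apply: sumr_ge0.
by rewrite -H1 (sum_mg (pi h s) i).
Qed.

Lemma dev_dist (pi : policy R S A) h s (i : 'I_n) (mu : ppolicy R S A i) :
  is_dist (pi h s) -> is_dist (mu h s) -> is_dist (dev mu pi h s).
Proof.
move=> [H0 H1] [M0 M1]; split.
  by move=> a; rewrite /dev mulr_ge0 // sumr_ge0.
by rewrite /dev (devF (mu h s) (pi h s)) M1 H1 mulr1.
Qed.

Lemma pm_dev (pi : policy R S A) h s (i j : 'I_n) (ij : i != j) (mu : ppolicy R S A i) (x : A i) (y : A j) :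
  pm (dev mu pi h s) x y = mu h s x * marg pi h s y.
Proof. exact: (devPM ij x y (mu h s) (pi h s)). Qed.

Lemma prod_marg_dist (pi : policy R S A) h s :
  is_dist (pi h s) -> (forall k, \sum_(z : A k) marg pi h s z = 1).
Proof. by move=> H k; case: (marg_dist k H). Qed.

Lemma pm_hat (pi : policy R S A) h s (i j : 'I_n) (ij : i != j) (x : A i) (y : A j) :
  is_dist (pi h s) -> pm (prod_marg pi h s) x y = marg pi h s x * marg pi h s y.
Proof.
move=> H; rewrite /pm /prod_marg.
exact: (prodM2 (m := fun k z => marg pi h s z) ij x y (prod_marg_dist H)).
Qed.

Lemma marg_hat (pi : policy R S A) h s (j : 'I_n) (y : A j) :
  is_dist (pi h s) -> marg (prod_marg pi) h s y = marg pi h s (i := j) y.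
Proof.
move=> H; rewrite /marg /prod_marg.
exact: (prodM1 (m := fun k z => marg pi h s z) y (prod_marg_dist H)).
Qed.

Lemma hat_dist (pi : policy R S A) h s :
  is_dist (pi h s) -> is_dist (prod_marg pi h s).
Proof.
move=> H; split.
  move=> a; apply: prodr_ge0 => k _; by case: (marg_dist k H).
rewrite /prod_marg -(prod_sum_dep (fun k z => marg pi h s z)); apply: big1 => k _.
exact: prod_marg_dist.
Qed.

End Facts.


Section Main.
Variable R : realType.
Variable n : nat.
Variable S : finType.
Variable A : 'I_n -> finType.
Local Notation joint := (joint A).

Lemma final_alg (a b : 'I_n -> R) (c eps : R) (i : 'I_n) :
  \sum_j a j = 0 -> \sum_j b j = 0 -> (forall j, b j - a j <= eps) -> c - a i <= eps ->
  c - b i <= n%:R * eps /\ 0 <= eps.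
Proof.
move=> Ha Hb Hj Hc.
have Hs : \sum_j (eps - (b j - a j)) = n%:R * eps.
  by rewrite sumrB sumrB Ha Hb subr0 subr0 sumr_const card_ord mulr_natl.
have Hge : forall j, 0 <= eps - (b j - a j) by move=> j; rewrite subr_ge0.
have Hi : eps - (b i - a i) <= n%:R * eps.
  rewrite -Hs (bigD1 i) //= lerDl; exact: sumr_ge0.
have n0 : (0 < n)%N by apply: leq_ltn_trans (ltn_ord i).
have Hn : 0 <= n%:R * eps by rewrite -Hs; exact: sumr_ge0.
have eps0 : 0 <= eps.
  by rewrite pmulr_rge0 // in Hn; rewrite ltr0n.
by split => //; lra.
Qed.

Lemma lim_sum (u : 'I_n -> nat -> R) :
  (forall j, cvgn (u j)) ->
  cvgn (fun N => \sum_j u j N) /\ limn (fun N => \sum_j u j N) = \sum_j limn (u j).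
Proof.
move=> Hc; rewrite unlock /=; elim: (index_enum _) => [|j s [IH1 IH2]].
  by split; [apply: is_cvg_cst|rewrite lim_cst].
have -> : (fun N => reducebig 0 (j :: s) (fun i => BigBody i +%R true (u i N)))
   = (u j : R ^nat) + ((fun N => reducebig 0 s (fun i => BigBody i +%R true (u i N))) : R ^nat).
  by apply: funext => N.
split; first exact: is_cvgD.
by rewrite limD // IH2.
Qed.

Variables (P : trans R S A) (r : reward R S A) (gamma : R).

Lemma termwise (E : rel 'I_n) (pi : policy R S A) h K :
  irreflexive E ->
  (forall t, (h <= t)%N -> (t < h + K)%N -> forall i s, dec E i (r t i s) /\
        forall s', dec E i (fun a => gamma * P t s a s')) ->
  (forall t, (h <= t)%N -> (t < h + K)%N -> forall s, is_dist (pi t s)) ->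
  forall rho k, (k < K)%N ->
  (forall i (mu : ppolicy R S A i),
     disc_term P r gamma (dev mu (prod_marg pi)) i h rho k =
     disc_term P r gamma (dev mu pi) i h rho k) /\
  (forall j, disc_term P r gamma (prod_marg pi) j h rho k =
     disc_term P r gamma (dev (fun t s (x : A j) => marg pi t s x) pi) j h rho k).
Proof.
move=> irrE Hdec Hpi rho k kK; split.
  move=> i mu.
  have Hpm : forall t, (h <= t)%N -> (t < h + K)%N -> forall s,
     forall j, E i j -> forall (x : A i) (y : A j),
     pm (dev mu (prod_marg pi) t s) x y = pm (dev mu pi t s) x y.
    move=> t ht tK s j Eij x y.
    have ij : i != j by apply/eqP => eij; subst j; rewrite irrE in Eij.
    by rewrite !pm_dev // marg_hat //; apply: Hpi.
  apply: (@disc_congr R n S A P r gamma _ _ _ h rho K) => // t ht tK s.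
    by move=> s'; apply: dec_sum; [exact: Hpm | case: (Hdec t ht tK i s)].
  by apply: dec_sum; [exact: Hpm | case: (Hdec t ht tK i s)].
move=> j.
have Hpm : forall t, (h <= t)%N -> (t < h + K)%N -> forall s,
   forall l, E j l -> forall (x : A j) (y : A l),
   pm (prod_marg pi t s) x y = pm (dev (fun t s (x : A j) => marg pi t s x) pi t s) x y.
  move=> t ht tK s l Ejl x y.
  have jl : j != l by apply/eqP => ejl; subst l; rewrite irrE in Ejl.
  by rewrite pm_dev // pm_hat //; apply: Hpi.
apply: (@disc_congr R n S A P r gamma _ _ _ h rho K) => // t ht tK s.
  by move=> s'; apply: dec_sum; [exact: Hpm | case: (Hdec t ht tK j s)].
by apply: dec_sum; [exact: Hpm | case: (Hdec t ht tK j s)].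
Qed.

End Main.


Section Conv.
Variable R : realType.
Variable n : nat.
Variable S : finType.
Variable A : 'I_n -> finType.
Local Notation joint := (joint A).

Lemma sd_dist (P : trans R S A) (p : policy R S A) h rho :
  (forall t s a, is_dist (P t s a)) -> (forall t s, is_dist (p t s)) -> is_dist rho ->
  forall k, is_dist (state_dist P p h rho k).
Proof.
move=> HP Hp Hr; elim=> [//|k [IH0 IH1]]; split.
  move=> s' /=; apply: sumr_ge0 => s _; apply: sumr_ge0 => a _.
  by rewrite !mulr_ge0 //; [case: (Hp (h + k)%N s)|case: (HP (h + k)%N s a)].
rewrite /= exchange_big /= -[RHS]IH1; apply: eq_bigr => s _.
rewrite exchange_big /= -[RHS]mulr1 -(proj2 (Hp (h + k)%N s)) mulr_sumr.
apply: eq_bigr => a _; rewrite -mulr_sumr (proj2 (HP (h + k)%N s a)) mulr1 //.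
Qed.

Lemma dist_le1 (T : finType) (d : T -> R) x : is_dist d -> d x <= 1.
Proof.
move=> [H0 H1]; rewrite -H1 (bigD1 x) //= lerDl; exact: sumr_ge0.
Qed.

Lemma exp_reward_bound (r : reward R S A) i (p : policy R S A) t d M :
  (forall s a, `|r t i s a| <= M) -> is_dist d -> (forall s, is_dist (p t s)) ->
  `|exp_reward r i p t d| <= M.
Proof.
move=> HM [d0 d1] Hp; rewrite /exp_reward.
apply: le_trans; first apply: ler_norm_sum.
apply: (@le_trans _ _ (\sum_s \sum_(a : joint) d s * p t s a * M)).
  apply: ler_sum => s _; apply: le_trans; first apply: ler_norm_sum.
  apply: ler_sum => a _; rewrite normrM ger0_norm; last first.
    by rewrite mulr_ge0 //; case: (Hp s).
  by apply: ler_wpM2l => //; rewrite mulr_ge0 //; case: (Hp s).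
rewrite -[X in _ <= X]mul1r -d1 mulr_suml; apply: ler_sum => s _.
rewrite -!mulr_suml -!mulr_sumr (proj2 (Hp s)) mulr1.
done.
Qed.

Lemma cvg_ps (P0 : S -> joint -> S -> R) (r0 : 'I_n -> S -> joint -> R) (gamma : R)
  (p : policy R S A) i h rho :
  0 <= gamma < 1 -> (forall s a, is_dist (P0 s a)) -> (forall t s, is_dist (p t s)) ->
  is_dist rho ->
  cvgn (fun N => \sum_(0 <= k < N)
     disc_term (fun _ => P0) (fun _ => r0) gamma p i h rho k).
Proof.
move=> /andP [g0 g1] HP Hp Hr.
pose M := \sum_s \sum_(a : joint) `|r0 i s a|.
have HM : forall s a, `|r0 i s a| <= M.
  move=> s a; rewrite /M (bigD1 s) //= (bigD1 a) //= -addrA lerDl.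
  by rewrite addr_ge0 // sumr_ge0 // => *; rewrite ?sumr_ge0.
pose u := disc_term (fun _ => P0) (fun _ => r0) gamma p i h rho.
change (cvgn (series u)); apply: normed_cvg.
apply: (@series_le_cvg _ _ (geometric M gamma)).
- by move=> k /=; exact: normr_ge0.
- move=> k; apply: geometric_ge0 => //.
  by rewrite /M; apply: sumr_ge0 => s _; apply: sumr_ge0 => a _; exact: normr_ge0.
- move=> k; rewrite /u /disc_term /geometric /= normrM ger0_norm ?exprn_ge0 //.
  rewrite mulrC; apply: ler_wpM2r; first by rewrite exprn_ge0.
  by apply: exp_reward_bound => //; apply: sd_dist.
- by apply: is_cvg_geometric_series; rewrite ger0_norm.
Qed.

End Conv.

Unset Implicit Arguments.

Theorem proposition3 (R : realType) (n : nat) (S : finType) (A : 'I_n -> finType) :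
  (* infinite horizon, time-independent P and r, discount 0 <= gamma < 1 *)
  (forall (gamma eps : R) (P : S -> joint A -> S -> R)
          (r : 'I_n -> S -> joint A -> R) (pi : policy R S A),
     0 <= gamma < 1 ->
     (forall s a, is_dist (P s a)) ->
     zs_NMG predT (fun _ => P) (fun _ => r) gamma ->
     valid_policy predT pi ->
     is_CCE (Vinf (fun _ => P) (fun _ => r) gamma) predT eps pi ->
     is_NE (Vinf (fun _ => P) (fun _ => r) gamma) predT
           ((n.+1)%:R * eps / (1 - gamma)) (prod_marg pi))
  /\
  (* finite horizon H (steps 0 .. H-1) *)
  (forall (H : nat) (gamma eps : R) (P : trans R S A) (r : reward R S A)
          (pi : policy R S A),
     0 <= gamma <= 1 ->
     (forall h, (h < H)%N -> forall s a, is_dist (P h s a)) ->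
     zs_NMG (fun h => (h < H)%N) P r gamma ->
     valid_policy (fun h => (h < H)%N) pi ->
     is_CCE (Vfin H P r gamma) (fun h => (h < H)%N) eps pi ->
     is_NE (Vfin H P r gamma) (fun h => (h < H)%N)
           ((n.+1)%:R * H%:R * eps) (prod_marg pi)).
Proof.
split.
- move=> gamma eps P r pi /andP [g0 g1] HP Hz Hpi Hcce; split; last first.
    move=> h _ s; exists (fun i => marg pi h s (i := i)); split => // i.
    exact: marg_dist (Hpi h isT s).
  move=> i mu Hmu rho Hrho h _.
  have [E [irrE [Hdec Hzero]]] := nmg_facts Hz.
  pose mj := fun j => (fun t s (x : A j) => marg pi t s x) : ppolicy R S A j.
  have Hmj : forall j t, predT t -> forall s, is_dist (mj j t s).
    by move=> j t _ s; exact: marg_dist (Hpi t isT s).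
  have TW := fun k => @termwise R n S A (fun _ => P) (fun _ => r) gamma E pi h k.+1 irrE
     (fun t _ _ => Hdec t isT) (fun t _ _ => Hpi t isT) rho k (ltnSn k).
  have E1 : Vinf (fun _ => P) (fun _ => r) gamma (dev mu (prod_marg pi)) i h rho =
            Vinf (fun _ => P) (fun _ => r) gamma (dev mu pi) i h rho.
    rewrite /Vinf; apply: (f_equal (fun u : nat -> R => limn u)); apply: funext => N; apply: eq_bigr => k _.
    exact: (proj1 (TW k) i mu).
  have Eps : forall j, (fun N => \sum_(0 <= k < N)
       disc_term (fun _ => P) (fun _ => r) gamma (prod_marg pi) j h rho k) =
     (fun N => \sum_(0 <= k < N)
       disc_term (fun _ => P) (fun _ => r) gamma (dev (mj j) pi) j h rho k).
    move=> j; apply: funext => N; apply: eq_bigr => k _.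
    exact: (proj2 (TW k) j).
  have Cpi : forall j, cvgn (fun N => \sum_(0 <= k < N)
       disc_term (fun _ => P) (fun _ => r) gamma pi j h rho k).
    move=> j; apply: cvg_ps => //; first by rewrite g0 g1.
    by move=> t s; apply: Hpi.
  have Chat : forall j, cvgn (fun N => \sum_(0 <= k < N)
       disc_term (fun _ => P) (fun _ => r) gamma (prod_marg pi) j h rho k).
    move=> j; rewrite Eps; apply: cvg_ps => //; first by rewrite g0 g1.
    by move=> t s; apply: dev_dist; [apply: Hpi|apply: Hmj].
  have Sum0 : forall p : policy R S A,
      (forall j, cvgn (fun N => \sum_(0 <= k < N)
          disc_term (fun _ => P) (fun _ => r) gamma p j h rho k)) ->
      \sum_j Vinf (fun _ => P) (fun _ => r) gamma p j h rho = 0.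
    move=> p Cp; have [_ L] := lim_sum Cp; rewrite /Vinf -L.
    have -> : (fun N => \sum_j \sum_(0 <= k < N)
          disc_term (fun _ => P) (fun _ => r) gamma p j h rho k) = (fun _ => 0).
      apply: funext => N; rewrite exchange_big /=; apply: big1 => k _.
      by apply: disc_sum0 => s a; exact: (Hzero 0%N isT s a).
    exact: lim_cst.
  have [Hle e0] := @final_alg R n
     (fun j => Vinf (fun _ => P) (fun _ => r) gamma pi j h rho)
     (fun j => Vinf (fun _ => P) (fun _ => r) gamma (prod_marg pi) j h rho)
     (Vinf (fun _ => P) (fun _ => r) gamma (dev mu pi) i h rho) eps i
     (Sum0 _ Cpi) (Sum0 _ Chat)
     (fun j => ltac:(rewrite /Vinf Eps; exact: (Hcce j (mj j) (Hmj j) rho Hrho h isT)))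
     (Hcce i mu Hmu rho Hrho h isT).
  rewrite E1; apply: (le_trans Hle).
  have g2 : 0 < 1 - gamma by rewrite subr_gt0.
  rewrite ler_pdivlMr // -addn1 natrD.
  have n0 : 0 <= n%:R :> R by [].
  have : 0 <= n%:R * eps * gamma by rewrite !mulr_ge0.
  lra.
- move=> H gamma eps P r pi _ HP Hz Hpi Hcce; split; last first.
    move=> h hH s; exists (fun i => marg pi h s (i := i)); split => // i.
    exact: marg_dist (Hpi h hH s).
  move=> i mu Hmu rho Hrho h hH.
  have [E [irrE [Hdec Hzero]]] := nmg_facts Hz.
  pose mj := fun j => (fun t s (x : A j) => marg pi t s x) : ppolicy R S A j.
  have Hmj : forall j t, (t < H)%N -> forall s, is_dist (mj j t s).
    by move=> j t tH s; exact: marg_dist (Hpi t tH s).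
  have hK : (h + (H - h) = H)%N by rewrite subnKC // ltnW.
  have TW := fun k (kK : (k < H - h)%N) =>
     @termwise R n S A P r gamma E pi h (H - h) irrE
     (fun t _ tK => Hdec t (etrans (f_equal _ (esym hK)) tK))
     (fun t _ tK => Hpi t (etrans (f_equal _ (esym hK)) tK)) rho k kK.
  have E1 : Vfin H P r gamma (dev mu (prod_marg pi)) i h rho =
            Vfin H P r gamma (dev mu pi) i h rho.
    rewrite /Vfin; apply: eq_big_nat => k /andP [_ kK].
    exact: (proj1 (TW k kK) i mu).
  have Eb : forall j, Vfin H P r gamma (prod_marg pi) j h rho =
      Vfin H P r gamma (dev (mj j) pi) j h rho.
    move=> j; rewrite /Vfin; apply: eq_big_nat => k /andP [_ kK].
    exact: (proj2 (TW k kK) j).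
  have Sum0 : forall p : policy R S A, \sum_j Vfin H P r gamma p j h rho = 0.
    move=> p; rewrite /Vfin exchange_big /= big_seq_cond; apply: big1 => k.
    rewrite mem_index_iota andbT => /andP [_ kK].
    apply: disc_sum0 => s a; apply: Hzero.
    by rewrite -hK ltn_add2l.
  have [Hle e0] := @final_alg R n
     (fun j => Vfin H P r gamma pi j h rho)
     (fun j => Vfin H P r gamma (prod_marg pi) j h rho)
     (Vfin H P r gamma (dev mu pi) i h rho) eps i
     (Sum0 _) (Sum0 _)
     (fun j => ltac:(rewrite /= Eb; exact: (Hcce j (mj j) (Hmj j) rho Hrho h hH)))
     (Hcce i mu Hmu rho Hrho h hH).
  rewrite E1; apply: (le_trans Hle).
  have H1 : 1 <= H%:R :> R by rewrite ler1n; apply: leq_ltn_trans hH.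
  rewrite -addn1 natrD.
  have n0 : 0 <= n%:R :> R by [].
  have : 0 <= (n%:R + 1) * eps * (H%:R - 1) by rewrite !mulr_ge0 // ?subr_ge0 // addr_ge0.
  nra.

Qed.
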